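(* Let $Z$ be a bounded metric space with $\operatorname{diam}Z>0$ and $Y=\operatorname{Co}(Z)$. Then $Y$ is $\delta$-hyperbolic with $\delta=\delta(\mathrm H^2)$ the hyperbolicity constant of the hyperbolic plane; identifying each $z\in Z$ with the point at infinity represented by the ray $t\mapsto(z,t)$ gives an inclusion $Z\subset\partial_\infty Y$, and the metric of $Z$ is visual on $Z$ (with respect to the vertex $o$ and parameter $a=e$, i.e. there are $c_1,c_2>0$ with $c_1e^{-(z|z')_o}\le|zz'|\le c_2e^{-(z|z')_o}$ for $z,z'\in Z$). If in addition $Z$ is complete, then $\partial_\infty Y=Z$.
   Context: Hyperbolic cone: with $\mu=\pi/\operatorname{diam}Z$, $\operatorname{Co}(Z)=Z\times[0,\infty)/(Z\times\{0\})$ with metric: $|(z,t)(z',t')|$ is the length of the side $\bar x\bar x'$ of a triangle $\bar o\bar x\bar x'\subset\mathrm H^2$ with $|\bar o\bar x|=t$, $|\bar o\bar x'|=t'$ and angle $\mu|zz'|$ at $\bar o$; the vertex is $o=Z\times\{0\}$. Gromov product $(x|x')_o=\frac12(|xo|+|x'o|-|xx'|)$. $X$ is $\delta$-hyperbolic if $(x|x'')_o\ge\min\{(x|x')_o,(x'|x'')_o\}-\delta$ for all $x,x',x''$ (for a base point $o$). Sequences converging to infinity: $(x_i|x_j)_o\to\infty$; equivalence: $(x_i|x_i')_o\to\infty$; $\partial_\infty X$ is the set of classes, with $(\xi|\xi')_o=\inf\liminf_i(x_i|x_i')_o$ over representatives. A metric $d$ on (a subset of) $\partial_\infty X$ is visual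 if there are $o$, $a>1$, $c_1,c_2>0$ with $c_1a^{-(\xi|\xi')_o}\le d(\xi,\xi')\le c_2a^{-(\xi|\xi')_o}$. *)

(* Defs.v *)
From Stdlib Require Import Reals.
From Coquelicot Require Import Coquelicot.
Open Scope R_scope.

Definition arcosh (x : R) : R := ln (x + sqrt (x * x - 1)).

Definition is_metric {Z : Type} (d : Z -> Z -> R) : Prop :=
  (forall x y, d x y = 0 <-> x = y) /\
  (forall x y, d x y = d y x) /\
  (forall x y z, d x z <= d x y + d y z).

Definition complete_metric {Z : Type} (d : Z -> Z -> R) : Prop :=
  forall u : nat -> Z,
    (forall eps, 0 < eps -> exists N, forall m n, (N <= m)%nat -> (N <= n)%nat -> d (u m) (u n) < eps) ->
    exists z, forall eps, 0 < eps -> exists N, forall n, (N <= n)%nat -> d (u n) z < eps.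

Definition gprod {X : Type} (dist : X -> X -> R) (o x y : X) : R :=
  (dist x o + dist y o - dist x y) / 2.

Definition gromov_hyperbolic {X : Type} (dist : X -> X -> R) (delta : R) : Prop :=
  exists o : X, forall x x' x'' : X,
    gprod dist o x x'' >= Rmin (gprod dist o x x') (gprod dist o x' x'') - delta.

Definition H2 : Type := { p : R * R | 0 < snd p }.
Definition H2dist (p q : H2) : R :=
  let (x1, y1) := proj1_sig p in
  let (x2, y2) := proj1_sig q in
  arcosh (1 + ((x1 - x2) ^ 2 + (y1 - y2) ^ 2) / (2 * y1 * y2)).

Definition delta_H2 : R := real (Glb_Rbar (fun delta => gromov_hyperbolic H2dist delta)).

(* Hyperbolic cone Co(Z) = Z x [0,oo) / (Z x {0}); vertex = None, (z,t) with t>0 = Some (z,t) *)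
Definition cone (Z : Type) : Type := option (Z * posreal).
Definition vertex {Z : Type} : cone Z := None.
Definition ray_pt {Z : Type} (z : Z) (n : nat) : cone Z :=
  match n with
  | O => None
  | S k => Some (z, mkposreal (INR (S k)) (lt_0_INR (S k) (PeanoNat.Nat.lt_0_succ k)))
  end.

(* D = diam Z, mu = PI / D; side of H^2-triangle with sides t, t' and angle mu*|zz'| *)
Definition cone_dist {Z : Type} (d : Z -> Z -> R) (D : R) (p q : cone Z) : R :=
  match p, q with
  | None, None => 0
  | None, Some (_, t) => pos t
  | Some (_, t), None => pos t
  | Some (z, t), Some (z', t') =>
      arcosh (cosh t * cosh t' - sinh t * sinh t' * cos (PI / D * d z z'))
  end.

Definition conv_infty {X : Type} (dist : X -> X -> R) (o : X) (x : nat -> X) : Prop :=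
  forall M, exists N, forall i j, (N <= i)%nat -> (N <= j)%nat -> gprod dist o (x i) (x j) > M.

Definition seq_equiv {X : Type} (dist : X -> X -> R) (o : X) (x y : nat -> X) : Prop :=
  forall M, exists N, forall i, (N <= i)%nat -> gprod dist o (x i) (y i) > M.

Definition gprod_infty {X : Type} (dist : X -> X -> R) (o : X) (x y : nat -> X) : Rbar :=
  Rbar_glb (fun r => exists x' y' : nat -> X,
    conv_infty dist o x' /\ conv_infty dist o y' /\
    seq_equiv dist o x x' /\ seq_equiv dist o y y' /\
    r = LimInf_seq (fun i => gprod dist o (x' i) (y' i))).

(* a^{-g} for g in the extended reals, a = e: e^{-oo} = 0 (value at -oo is irrelevant:
   Gromov products based at o are >= 0) *)
Definition exp_neg (g : Rbar) : R :=
  match g with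
  | Finite r => exp (- r)
  | p_infty => 0
  | m_infty => 0
  end.

(* Main.v *)
Require Import Defs.
From Stdlib Require Import Reals.
From Coquelicot Require Import Coquelicot.
From Stdlib Require Import Lra Psatz Classical.
Open Scope R_scope.

Lemma sq_nonneg x : 0 <= x*x.
Proof. pose proof (Rle_0_sqr x); unfold Rsqr in *; lra. Qed.

Lemma Q_aux (A B C u s : R) : 0 <= A <= 1 -> 0 <= C <= 1 -> 0 <= u -> B = 1 - u ->
  0 <= s <= 2 -> A*C*s <= A*B*s + 2*u.
Proof.
  intros hA hC hu hB hs. subst B.
  assert (A*C*s <= A*s). { apply Rmult_le_compat_r. lra. nra. }
  assert (A*u*s <= u*s). { apply Rmult_le_compat_r. lra. nra. }
  assert (u*s <= 2*u) by nra. nra.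
Qed.

Lemma Q_ineq (a1 a2 a3 s12 s23 s13 : R) :
  0 < a1 <= 1 -> 0 < a2 <= 1 -> 0 < a3 <= 1 ->
  0 <= s12 <= 2 -> 0 <= s23 <= 2 -> 0 <= s13 -> s13 <= 2 * (s12 + s23) ->
  (a1*a1 + a3*a3)/2 + (1 - a1*a1)*(1-a3*a3)*s13/4 <=
  5 * (((a1*a1 + a2*a2)/2 + (1 - a1*a1)*(1-a2*a2)*s12/4) +
       ((a2*a2 + a3*a3)/2 + (1 - a2*a2)*(1-a3*a3)*s23/4)).
Proof.
  intros.
  assert (0 <= 1 - a1*a1 <= 1) by nra.
  assert (0 <= 1 - a2*a2 <= 1) by nra.
  assert (0 <= 1 - a3*a3 <= 1) by nra.
  assert (h1: (1 - a1*a1)*(1-a3*a3)*s13 <= 2*((1 - a1*a1)*(1-a3*a3)*s12) + 2*((1 - a1*a1)*(1-a3*a3)*s23)).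
  { assert (0 <= (1 - a1*a1)*(1-a3*a3)) by nra. nra. }
  assert (h2: (1 - a1*a1)*(1-a3*a3)*s12 <= (1 - a1*a1)*(1-a2*a2)*s12 + 2 * (a2*a2)).
  { apply Q_aux; auto; nra. }
  assert (h3: (1 - a3*a3)*(1-a1*a1)*s23 <= (1 - a3*a3)*(1-a2*a2)*s23 + 2 * (a2*a2)).
  { apply Q_aux; auto; nra. }
  assert (0 <= (1 - a1*a1)*(1-a2*a2)*s12) by (apply Rmult_le_pos; nra).
  assert (0 <= (1 - a2*a2)*(1-a3*a3)*s23) by (apply Rmult_le_pos; nra).
  nra.
Qed.

Lemma exp_le_inv' x y : exp x <= exp y -> x <= y.
Proof. intros h. destruct (Rle_dec x y); auto. assert (exp y < exp x) by (apply exp_increasing; lra). lra. Qed.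

Lemma exp_le' x y : x <= y -> exp x <= exp y.
Proof. intros h. destruct (Req_dec x y). subst; lra. left; apply exp_increasing; lra. Qed.

Lemma ln_le' x y : 0 < x -> x <= y -> ln x <= ln y.
Proof. intros. destruct (Req_dec x y). subst; lra. left; apply ln_increasing; lra. Qed.

Lemma arcosh_pos_arg v : 1 <= v -> 1 <= v + sqrt (v*v-1).
Proof. intros. pose proof (sqrt_pos (v*v-1)). lra. Qed.

Lemma exp_arcosh v : 1 <= v -> exp (arcosh v) = v + sqrt (v*v-1).
Proof. intros. unfold arcosh. apply exp_ln. pose proof (arcosh_pos_arg v H). lra. Qed.

Lemma arcosh_ge0 v : 1 <= v -> 0 <= arcosh v.
Proof. intros. unfold arcosh. rewrite <- ln_1. apply ln_le'. lra. apply arcosh_pos_arg; auto. Qed.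

Lemma exp_arcosh_bounds v : 1 <= v -> v <= exp (arcosh v) <= 2 * v.
Proof.
  intros. rewrite exp_arcosh; auto. pose proof (sqrt_pos (v*v-1)).
  split. lra.
  assert (sqrt (v*v-1) <= sqrt (v*v)) by (apply sqrt_le_1_alt; lra).
  rewrite sqrt_square in H1; lra.
Qed.

Lemma arcosh_le v v' : 1 <= v -> v <= v' -> arcosh v <= arcosh v'.
Proof.
  intros. unfold arcosh. apply ln_le'. pose proof (arcosh_pos_arg v H); lra.
  assert (sqrt (v*v-1) <= sqrt (v'*v'-1)) by (apply sqrt_le_1_alt; nra). lra.
Qed.

Lemma cosh_sq x : cosh x * cosh x - 1 = sinh x * sinh x.
Proof. unfold cosh, sinh. rewrite exp_Ropp. pose proof (exp_pos x). field. lra. Qed.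

Lemma cosh_ge1 x : 1 <= cosh x.
Proof. unfold cosh. rewrite exp_Ropp. pose proof (exp_pos x).
  assert (0 <= (exp x - 1)*(exp x - 1)) by (pose proof (Rle_0_sqr (exp x - 1)); unfold Rsqr in *; lra).
  apply (Rmult_le_reg_r (2 * exp x)). lra.
  replace ((exp x + / exp x) / 2 * (2 * exp x)) with (exp x * exp x + 1) by (field; lra). nra. Qed.

Lemma sinh_ge0 x : 0 <= x -> 0 <= sinh x.
Proof. intros. unfold sinh. assert (exp (-x) <= exp x) by (apply exp_le'; lra). lra. Qed.

Lemma arcosh_cosh x : 0 <= x -> arcosh (cosh x) = x.
Proof.
  intros. unfold arcosh. rewrite cosh_sq. rewrite sqrt_square by (apply sinh_ge0; auto).
  replace (cosh x + sinh x) with (exp x) by (unfold cosh, sinh; field). apply ln_exp.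
Qed.

Lemma arcosh_1 : arcosh 1 = 0.
Proof. replace 1 with (cosh 0). apply arcosh_cosh; lra. unfold cosh. rewrite Ropp_0, exp_0. field. Qed.

Definition Vf (t t' s : R) : R := cosh t * cosh t' - sinh t * sinh t' * (1 - s).
Definition Gf (t t' s : R) : R := (t + t' - arcosh (Vf t t' s)) / 2.
Definition Qf (a a' s : R) : R := (a*a + a'*a')/2 + (1 - a*a)*(1-a'*a')*s/4.

Lemma Vf_Q t t' s : Vf t t' s * (exp (-t) * exp (-t')) = Qf (exp (-t)) (exp (-t')) s.
Proof.
  unfold Vf, Qf, cosh, sinh. rewrite !exp_Ropp. pose proof (exp_pos t). pose proof (exp_pos t').
  field. lra.
Qed.

Lemma exp_neg_le1 t : 0 <= t -> 0 < exp (-t) <= 1.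
Proof. intros. split. apply exp_pos. rewrite <- exp_0. apply exp_le'. lra. Qed.

Lemma Vf_ge1 t t' s : 0 <= t -> 0 <= t' -> 0 <= s -> 1 <= Vf t t' s.
Proof.
  intros. pose proof (Vf_Q t t' s).
  pose proof (exp_neg_le1 t H). pose proof (exp_neg_le1 t' H0).
  set (a := exp (-t)) in *. set (a' := exp (-t')) in *. clearbody a a'.
  unfold Qf in H2.
  apply (Rmult_le_reg_r (a*a')). nra.
  rewrite H2. assert (0 <= 1 - a*a) by nra. assert (0 <= 1 - a'*a') by nra.
  assert (0 <= (1 - a*a)*(1-a'*a')*s) by (apply Rmult_le_pos; [apply Rmult_le_pos|]; lra).
  pose proof (sq_nonneg (a-a')). nra.
Qed.

Lemma Gf_exp t t' s : 0 <= t -> 0 <= t' -> 0 <= s ->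
  Qf (exp (-t)) (exp (-t')) s <= exp (-2 * Gf t t' s) <= 2 * Qf (exp (-t)) (exp (-t')) s.
Proof.
  intros. rewrite <- Vf_Q. unfold Gf.
  replace (-2 * ((t + t' - arcosh (Vf t t' s)) / 2)) with (arcosh (Vf t t' s) + (-t) + (-t')) by field.
  rewrite !exp_plus. pose proof (exp_arcosh_bounds _ (Vf_ge1 t t' s H H0 H1)).
  pose proof (exp_pos (-t)). pose proof (exp_pos (-t')).
  assert (0 < exp (-t) * exp (-t')) by nra. nra.
Qed.

Definition dcore : R := ln 20 / 2.

Lemma core t1 t2 t3 s12 s23 s13 :
  0 <= t1 -> 0 <= t2 -> 0 <= t3 ->
  0 <= s12 <= 2 -> 0 <= s23 <= 2 -> 0 <= s13 -> s13 <= 2 * (s12 + s23) ->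
  Gf t1 t3 s13 >= Rmin (Gf t1 t2 s12) (Gf t2 t3 s23) - dcore.
Proof.
  intros.
  pose proof (exp_neg_le1 t1 H). pose proof (exp_neg_le1 t2 H0). pose proof (exp_neg_le1 t3 H1).
  pose proof (Q_ineq _ _ _ _ _ _ H6 H7 H8 H2 H3 H4 H5) as HQ.
  pose proof (Gf_exp t1 t3 s13 H H1 H4) as E13.
  pose proof (Gf_exp t1 t2 s12 H H0 (proj1 H2)) as E12.
  pose proof (Gf_exp t2 t3 s23 H0 H1 (proj1 H3)) as E23.
  unfold Qf in *.
  assert (Hm: exp (-2 * Gf t1 t3 s13) <= 20 * exp (-2 * Rmin (Gf t1 t2 s12) (Gf t2 t3 s23))).
  { unfold Rmin. destruct (Rle_dec (Gf t1 t2 s12) (Gf t2 t3 s23)).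
    - assert (exp (-2 * Gf t2 t3 s23) <= exp (-2 * Gf t1 t2 s12)) by (apply exp_le'; lra). lra.
    - assert (exp (-2 * Gf t1 t2 s12) <= exp (-2 * Gf t2 t3 s23)) by (apply exp_le'; lra). lra. }
  assert (20 = exp (ln 20)) by (rewrite exp_ln; lra).
  rewrite H9 in Hm. rewrite <- exp_plus in Hm. apply exp_le_inv' in Hm.
  unfold dcore. lra.
Qed.

Lemma angle_ineq th1 th2 th3 :
  0 <= th1 <= PI -> 0 <= th2 <= PI -> 0 <= th3 <= PI -> th3 <= th1 + th2 ->
  1 - cos th3 <= 2 * ((1 - cos th1) + (1 - cos th2)).
Proof.
  intros.
  destruct (Rle_dec (th1 + th2) PI).
  - assert (cos (th1 + th2) <= cos th3) by (apply cos_decr_1; lra).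
    rewrite cos_plus in H3.
    pose proof (sin2_cos2 th1). pose proof (sin2_cos2 th2). unfold Rsqr in *.
    pose proof (sq_nonneg (cos th1 + cos th2 - 2)). pose proof (sq_nonneg (sin th1 - sin th2)).
    nra.
  - assert (cos th1 <= cos (PI - th2)) by (apply cos_decr_1; lra).
    rewrite Rtrigo_facts.cos_pi_minus in H3. pose proof (COS_bound th3). lra.
Qed.

Definition tp {Z : Type} (p : cone Z) : R := match p with None => 0 | Some (_, t) => pos t end.
Definition zp {Z : Type} (z0 : Z) (p : cone Z) : Z := match p with None => z0 | Some (z, _) => z end.
Definition sC {Z : Type} (d : Z -> Z -> R) (D : R) (z0 : Z) (p q : cone Z) : R :=
  1 - cos (PI / D * d (zp z0 p) (zp z0 q)).

Lemma tp_ge0 {Z : Type} (p : cone Z) : 0 <= tp p.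
Proof. destruct p as [[z t]|]; simpl; [destruct t; simpl; lra | lra]. Qed.

Lemma Vf_0l t s : Vf 0 t s = cosh t.
Proof. unfold Vf. rewrite cosh_0, sinh_0. ring. Qed.
Lemma Vf_0r t s : Vf t 0 s = cosh t.
Proof. unfold Vf. rewrite cosh_0, sinh_0. ring. Qed.

Lemma cone_dist_V {Z : Type} (d : Z -> Z -> R) (D : R) (z0 : Z) (p q : cone Z) :
  cone_dist d D p q = arcosh (Vf (tp p) (tp q) (sC d D z0 p q)).
Proof.
  destruct p as [[z t]|], q as [[z' t']|]; simpl.
  - unfold Vf, sC; simpl. f_equal. ring.
  - rewrite Vf_0r, arcosh_cosh; auto. destruct t; simpl; lra.
  - rewrite Vf_0l, arcosh_cosh; auto. destruct t'; simpl; lra.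
  - rewrite Vf_0l, cosh_0, arcosh_1. auto.
Qed.

Lemma cone_dist_o {Z : Type} (d : Z -> Z -> R) (D : R) (p : cone Z) :
  cone_dist d D p vertex = tp p.
Proof. destruct p as [[z t]|]; reflexivity. Qed.

Lemma cone_gprod {Z : Type} (d : Z -> Z -> R) (D : R) (z0 : Z) (p q : cone Z) :
  gprod (cone_dist d D) vertex p q = Gf (tp p) (tp q) (sC d D z0 p q).
Proof.
  unfold gprod, Gf. rewrite !cone_dist_o. rewrite (cone_dist_V d D z0). reflexivity.
Qed.

Lemma metric_nonneg {Z : Type} (d : Z -> Z -> R) : is_metric d -> forall x y, 0 <= d x y.
Proof.
  intros [h1 [h2 h3]] x y. pose proof (h3 x y x). rewrite (h2 y x) in H.
  assert (d x x = 0) by (apply h1; auto). lra.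
Qed.

Lemma angle_range {Z : Type} (d : Z -> Z -> R) (D : R) :
  is_metric d -> is_lub (fun r => exists z z' : Z, r = d z z') D -> 0 < D ->
  forall x y, 0 <= PI / D * d x y <= PI.
Proof.
  intros Hm Hl HD x y. pose proof (metric_nonneg d Hm x y).
  assert (d x y <= D) by (apply (proj1 Hl); eauto).
  pose proof PI_RGT_0. split.
  - apply Rmult_le_pos; auto. apply Rlt_le, Rdiv_lt_0_compat; lra.
  - apply (Rmult_le_reg_r D); auto. replace (PI / D * d x y * D) with (PI * d x y) by (field; lra). nra.
Qed.

Lemma sC_range {Z : Type} (d : Z -> Z -> R) (D : R) z0 p q : 0 <= sC d D z0 p q <= 2.
Proof. unfold sC. pose proof (COS_bound (PI / D * d (zp z0 p) (zp z0 q))). lra. Qed.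

Lemma cone_hyp_core {Z : Type} (d : Z -> Z -> R) (D : R) (z0 : Z) :
  is_metric d -> is_lub (fun r => exists z z' : Z, r = d z z') D -> 0 < D ->
  forall p q r : cone Z,
  sC d D z0 p r <= 2 * (sC d D z0 p q + sC d D z0 q r).
Proof.
  intros Hm Hl HD p q r. unfold sC.
  pose proof (angle_range d D Hm Hl HD).
  apply angle_ineq; auto.
  destruct Hm as [_ [_ Ht]]. pose proof (Ht (zp z0 p) (zp z0 q) (zp z0 r)).
  assert (0 < PI / D) by (apply Rdiv_lt_0_compat; [exact PI_RGT_0|lra]).
  nra.
Qed.

Lemma cone_hyp {Z : Type} (d : Z -> Z -> R) (D : R) (z0 : Z) :
  is_metric d -> is_lub (fun r => exists z z' : Z, r = d z z') D -> 0 < D ->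
  forall p q r : cone Z,
  gprod (cone_dist d D) vertex p r >=
    Rmin (gprod (cone_dist d D) vertex p q) (gprod (cone_dist d D) vertex q r) - dcore.
Proof.
  intros. rewrite !(cone_gprod d D z0). apply core.
  apply tp_ge0. apply tp_ge0. apply tp_ge0. apply sC_range. apply sC_range.
  apply sC_range. apply cone_hyp_core; auto.
Qed.

Definition hden (t c : R) : R :=
  match Rlt_dec 0 (cosh t - sinh t * c) with left _ => cosh t - sinh t * c | right _ => 1 end.

Lemma hden_pos t c : 0 < hden t c.
Proof. unfold hden. destruct (Rlt_dec 0 (cosh t - sinh t * c)); lra. Qed.

Lemma hden_eq t c : 0 <= t -> c <= 1 -> hden t c = cosh t - sinh t * c.
Proof.
  intros. unfold hden. destruct (Rlt_dec 0 (cosh t - sinh t * c)); auto.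
  exfalso. apply n. pose proof (sinh_ge0 t H).
  assert (cosh t - sinh t = exp (-t)) by (unfold cosh, sinh; field).
  pose proof (exp_pos (-t)). nra.
Qed.

Lemma Hpt_pos (o : H2) t c s :
  0 < snd (fst (proj1_sig o) + snd (proj1_sig o) * (-(sinh t * s) / hden t c),
           snd (proj1_sig o) / hden t c).
Proof. simpl. apply Rdiv_lt_0_compat. apply (proj2_sig o). apply hden_pos. Qed.

Definition Hpt (o : H2) (t c s : R) : H2 :=
  exist _ (fst (proj1_sig o) + snd (proj1_sig o) * (-(sinh t * s) / hden t c),
           snd (proj1_sig o) / hden t c) (Hpt_pos o t c s).

Lemma H2dist_eq (p q : H2) : H2dist p q =
  arcosh (1 + ((fst (proj1_sig p) - fst (proj1_sig q)) ^ 2 + (snd (proj1_sig p) - snd (proj1_sig q)) ^ 2)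
              / (2 * snd (proj1_sig p) * snd (proj1_sig q))).
Proof. unfold H2dist. destruct (proj1_sig p), (proj1_sig q). reflexivity. Qed.

Lemma H2dist_coords (p p' q q' : H2) : proj1_sig p = proj1_sig p' -> proj1_sig q = proj1_sig q' ->
  H2dist p q = H2dist p' q'.
Proof. intros. rewrite !H2dist_eq, H, H0. reflexivity. Qed.

Lemma law_poly C1 S1 c1 s1 C2 S2 c2 s2 : C1*C1 - S1*S1 = 1 -> C2*C2 - S2*S2 = 1 ->
  c1*c1+s1*s1 = 1 -> c2*c2+s2*s2=1 ->
 (S2*s2*(C1 - S1*c1) - S1*s1*(C2-S2*c2))^2 + ((C2 - S2*c2) - (C1-S1*c1))^2 =
   2*(C1 - S1*c1)*(C2 - S2*c2)*(C1*C2 - S1*S2*(c1*c2+s1*s2) - 1).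
Proof.
  intros.
  assert (e1 : S1*S1*(s1*s1) = C1*C1 - 1 - S1*S1*(c1*c1)).
  { replace (s1*s1) with (1 - c1*c1) by lra. replace (C1*C1) with (1 + S1*S1) by lra. ring. }
  assert (e2 : S2*S2*(s2*s2) = C2*C2 - 1 - S2*S2*(c2*c2)).
  { replace (s2*s2) with (1 - c2*c2) by lra. replace (C2*C2) with (1 + S2*S2) by lra. ring. }
  set (d1 := C1 - S1*c1). set (d2 := C2 - S2*c2).
  replace ((S2*s2*d1 - S1*s1*d2)^2 + (d2 - d1)^2) with
    (d1*d1*(S2*S2*(s2*s2) + 1) + d2*d2*(S1*S1*(s1*s1)+1) - 2*d1*d2*(1 + S1*S2*s1*s2)) by ring.
  rewrite e1, e2. unfold d1, d2. ring.
Qed.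

Lemma H2_law (o : H2) t1 c1 s1 t2 c2 s2 : 0 <= t1 -> 0 <= t2 ->
  c1*c1+s1*s1 = 1 -> c2*c2+s2*s2=1 ->
  H2dist (Hpt o t1 c1 s1) (Hpt o t2 c2 s2) =
  arcosh (cosh t1 * cosh t2 - sinh t1 * sinh t2 * (c1*c2+s1*s2)).
Proof.
  intros. rewrite H2dist_eq. unfold Hpt. cbn [proj1_sig fst snd]. f_equal.
  assert (c1 <= 1) by nra. assert (c2 <= 1) by nra.
  rewrite !hden_eq by auto.
  pose proof (hden_pos t1 c1) as P1. pose proof (hden_pos t2 c2) as P2.
  rewrite !hden_eq in P1, P2 by auto.
  pose proof (proj2_sig o) as Pb. simpl in Pb.
  set (b := snd (proj1_sig o)) in *. set (a := fst (proj1_sig o)).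
  pose proof (law_poly (cosh t1) (sinh t1) c1 s1 (cosh t2) (sinh t2) c2 s2 (ltac:(pose proof (cosh_sq t1); lra)) (ltac:(pose proof (cosh_sq t2); lra)) H1 H2)
    as L.
  apply (Rmult_eq_reg_r (2 * (cosh t1 - sinh t1 * c1) * (cosh t2 - sinh t2 * c2))).
  2:{ apply Rgt_not_eq. apply Rmult_lt_0_compat; [apply Rmult_lt_0_compat|]; lra. }
  replace ((1 + ((a + b * (- (sinh t1 * s1) / (cosh t1 - sinh t1 * c1)) -
      (a + b * (- (sinh t2 * s2) / (cosh t2 - sinh t2 * c2)))) ^ 2 +
      (b / (cosh t1 - sinh t1 * c1) - b / (cosh t2 - sinh t2 * c2)) ^ 2) /
      (2 * (b / (cosh t1 - sinh t1 * c1)) * (b / (cosh t2 - sinh t2 * c2)))) *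
      (2 * (cosh t1 - sinh t1 * c1) * (cosh t2 - sinh t2 * c2)))
   with (2 * (cosh t1 - sinh t1 * c1) * (cosh t2 - sinh t2 * c2) +
         ((sinh t2 * s2 * (cosh t1 - sinh t1 * c1) - sinh t1 * s1 * (cosh t2 - sinh t2 * c2)) ^ 2 +
         (cosh t2 - sinh t2 * c2 - (cosh t1 - sinh t1 * c1)) ^ 2)).
  2:{ field. repeat split; lra. }
  rewrite L. ring.
Qed.

Lemma Hpt_o_coords (o : H2) : proj1_sig (Hpt o 0 1 0) = proj1_sig o.
Proof.
  unfold Hpt. cbn [proj1_sig]. rewrite hden_eq by lra. rewrite cosh_0, sinh_0.
  destruct (proj1_sig o) as [a b]. simpl. f_equal; field.
Qed.

Lemma H2_dist_o (o : H2) t c s : 0 <= t -> c*c+s*s = 1 -> H2dist (Hpt o t c s) o = t.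
Proof.
  intros. rewrite (H2dist_coords (Hpt o t c s) (Hpt o t c s) o (Hpt o 0 1 0)); auto.
  2: symmetry; apply Hpt_o_coords.
  rewrite H2_law by lra. rewrite cosh_0, sinh_0.
  replace (cosh t * 1 - sinh t * 0 * (c * 1 + s * 0)) with (cosh t) by ring.
  apply arcosh_cosh; auto.
Qed.

Lemma H2_gprod (o : H2) t1 c1 s1 t2 c2 s2 : 0 <= t1 -> 0 <= t2 ->
  c1*c1+s1*s1 = 1 -> c2*c2+s2*s2=1 ->
  gprod H2dist o (Hpt o t1 c1 s1) (Hpt o t2 c2 s2) = Gf t1 t2 (1 - (c1*c2+s1*s2)).
Proof.
  intros. unfold gprod, Gf, Vf. rewrite !H2_dist_o by auto. rewrite H2_law by auto.
  replace (1 - (1 - (c1 * c2 + s1 * s2))) with (c1 * c2 + s1 * s2) by ring. reflexivity.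
Qed.

Lemma Gf_anti t t' s s' : 0 <= t -> 0 <= t' -> 0 <= s -> s <= s' -> Gf t t' s' <= Gf t t' s.
Proof.
  intros. unfold Gf. assert (arcosh (Vf t t' s) <= arcosh (Vf t t' s')).
  { apply arcosh_le. apply Vf_ge1; auto. unfold Vf.
    pose proof (sinh_ge0 t H). pose proof (sinh_ge0 t' H0).
    assert (0 <= sinh t * sinh t') by (apply Rmult_le_pos; auto). nra. }
  lra.
Qed.

Lemma H2_compare (delta : R) : gromov_hyperbolic H2dist delta ->
  forall t1 t2 t3 th1 th2 th3, 0 <= t1 -> 0 <= t2 -> 0 <= t3 ->
  0 <= th1 <= PI -> 0 <= th2 <= PI -> 0 <= th3 <= PI -> th3 <= th1 + th2 ->
  Gf t1 t3 (1 - cos th3) >= Rmin (Gf t1 t2 (1 - cos th1)) (Gf t2 t3 (1 - cos th2)) - delta.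
Proof.
  intros [o Ho] t1 t2 t3 th1 th2 th3 h1 h2 h3 k1 k2 k3 k4.
  set (a2 := Rmin th2 (PI - th1)).
  assert (ha2 : 0 <= a2 <= th2). { unfold a2, Rmin. destruct (Rle_dec th2 (PI - th1)); lra. }
  assert (ha3 : th3 <= th1 + a2 <= PI). { unfold a2, Rmin. destruct (Rle_dec th2 (PI - th1)); lra. }
  pose proof (Ho (Hpt o t1 1 0) (Hpt o t2 (cos th1) (sin th1)) (Hpt o t3 (cos (th1 + a2)) (sin (th1 + a2)))) as Hh.
  assert (u0 : 1*1 + 0*0 = 1) by ring.
  assert (u1 : cos th1 * cos th1 + sin th1 * sin th1 = 1) by (pose proof (sin2_cos2 th1); unfold Rsqr in *; lra).
  assert (u2 : cos (th1+a2) * cos (th1+a2) + sin (th1+a2) * sin (th1+a2) = 1)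
    by (pose proof (sin2_cos2 (th1+a2)); unfold Rsqr in *; lra).
  rewrite !H2_gprod in Hh by auto.
  replace (1 * cos th1 + 0 * sin th1) with (cos th1) in Hh by ring.
  replace (1 * cos (th1 + a2) + 0 * sin (th1 + a2)) with (cos (th1+a2)) in Hh by ring.
  replace (cos th1 * cos (th1 + a2) + sin th1 * sin (th1 + a2)) with (cos a2) in Hh.
  2:{ rewrite <- cos_minus. replace (th1 - (th1+a2)) with (-a2) by ring. rewrite cos_neg. reflexivity. }
  assert (g1 : Gf t1 t3 (1 - cos (th1 + a2)) <= Gf t1 t3 (1 - cos th3)).
  { apply Gf_anti; auto. pose proof (COS_bound th3); lra.
    assert (cos (th1 + a2) <= cos th3) by (apply cos_decr_1; lra). lra. }
  assert (g2 : Gf t2 t3 (1 - cos th2) <= Gf t2 t3 (1 - cos a2)).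
  { apply Gf_anti; auto. pose proof (COS_bound a2); lra.
    assert (cos th2 <= cos a2) by (apply cos_decr_1; lra). lra. }
  unfold Rmin in *.
  destruct (Rle_dec (Gf t1 t2 (1 - cos th1)) (Gf t2 t3 (1 - cos a2)));
  destruct (Rle_dec (Gf t1 t2 (1 - cos th1)) (Gf t2 t3 (1 - cos th2))); lra.
Qed.

Lemma cosh_sinh_arcosh v : 1 <= v -> cosh (arcosh v) = v /\ sinh (arcosh v) = sqrt (v*v-1).
Proof.
  intros. unfold cosh, sinh. rewrite exp_Ropp, exp_arcosh by auto.
  pose proof (sqrt_sqrt (v*v-1) ltac:(nra)). pose proof (sqrt_pos (v*v-1)).
  set (q := sqrt (v*v-1)) in *.
  assert (/ (v + q) = v - q).
  { apply (Rmult_eq_reg_l (v+q)). rewrite Rinv_r by lra. nra. lra. }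
  rewrite H2. split; field.
Qed.

Lemma Hi_pos : 0 < snd (0, 1). Proof. simpl; lra. Qed.
Definition Hi : H2 := exist _ (0, 1) Hi_pos.

Lemma polar (p : H2) : exists t c s, 0 <= t /\ c*c+s*s = 1 /\ proj1_sig p = proj1_sig (Hpt Hi t c s).
Proof.
  destruct p as [[x y] hy]. simpl in hy.
  set (v := (x*x+y*y+1)/(2*y)).
  assert (hv : 1 <= v).
  { unfold v. apply (Rmult_le_reg_r (2*y)). lra. unfold Rdiv. rewrite Rmult_assoc, Rinv_l by lra.
    pose proof (sq_nonneg x). pose proof (sq_nonneg (y-1)). nra. }
  destruct (cosh_sinh_arcosh v hv) as [hc hs].
  pose proof (sqrt_pos (v*v-1)) as hq0. pose proof (sqrt_sqrt (v*v-1) ltac:(nra)) as hq.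
  set (q := sqrt (v*v-1)) in *.
  exists (arcosh v).
  destruct (Req_dec q 0) as [q0|q0].
  - exists 1, 0. split. apply arcosh_ge0; auto. split. ring.
    assert (v = 1) by nra.
    assert (x = 0 /\ y = 1).
    { unfold v in H. assert (x*x + y*y + 1 = 2*y).
      { assert (e : x*x+y*y+1 = (x*x+y*y+1)/(2*y) * (2*y)) by (field; lra). rewrite H in e. lra. }
      pose proof (sq_nonneg x). pose proof (sq_nonneg (y-1)). split; nra. }
    destruct H0; subst x y.
    unfold Hpt. cbn [proj1_sig fst snd]. rewrite hden_eq by (try apply arcosh_ge0; lra).
    rewrite hc, hs, q0, H. simpl. f_equal; field.
  - assert (qp : 0 < q) by lra.
    exists ((v - 1/y)/q), (-x/(q*y)). split. apply arcosh_ge0; auto. split.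
    + apply (Rmult_eq_reg_r (q*q*y*y)). 2:{ apply Rgt_not_eq. repeat apply Rmult_lt_0_compat; lra. }
      field_simplify. 2: (split; lra). replace (q^2) with (v*v-1) by (rewrite <- hq; ring). unfold v. field. lra.
    + assert (hd : cosh (arcosh v) - sinh (arcosh v) * ((v - 1/y)/q) = 1/y).
      { rewrite hc, hs. field. split; lra. }
      unfold Hpt. cbn [proj1_sig fst snd]. unfold hden. rewrite hd.
      destruct (Rlt_dec 0 (1/y)) as [_|n]. 2:{ exfalso; apply n. apply Rdiv_lt_0_compat; lra. }
      rewrite hs. simpl. f_equal; field; repeat split; lra.
Qed.

Lemma unit_sigma c1 s1 c2 s2 c3 s3 : c1*c1+s1*s1 = 1 -> c2*c2+s2*s2 = 1 -> c3*c3+s3*s3 = 1 ->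
  1 - (c1*c3+s1*s3) <= 2 * ((1 - (c1*c2+s1*s2)) + (1 - (c2*c3+s2*s3))).
Proof.
  intros. pose proof (sq_nonneg (c1 - 2*c2 + c3)). pose proof (sq_nonneg (s1 - 2*s2 + s3)). nra.
Qed.

Lemma unit_sigma_range c1 s1 c2 s2 : c1*c1+s1*s1 = 1 -> c2*c2+s2*s2 = 1 ->
  0 <= 1 - (c1*c2+s1*s2) <= 2.
Proof.
  intros. pose proof (sq_nonneg (c1 - c2)). pose proof (sq_nonneg (s1 - s2)).
  pose proof (sq_nonneg (c1 + c2)). pose proof (sq_nonneg (s1 + s2)). nra.
Qed.

Lemma H2_hyp : gromov_hyperbolic H2dist dcore.
Proof.
  exists Hi. intros p1 p2 p3.
  destruct (polar p1) as [t1 [c1 [s1 [ht1 [hu1 e1]]]]].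
  destruct (polar p2) as [t2 [c2 [s2 [ht2 [hu2 e2]]]]].
  destruct (polar p3) as [t3 [c3 [s3 [ht3 [hu3 e3]]]]].
  assert (G : forall a b a' b', proj1_sig a = proj1_sig a' -> proj1_sig b = proj1_sig b' ->
     gprod H2dist Hi a b = gprod H2dist Hi a' b').
  { intros. unfold gprod. rewrite (H2dist_coords a a' Hi Hi), (H2dist_coords b b' Hi Hi),
      (H2dist_coords a a' b b'); auto. }
  rewrite (G p1 p3 _ _ e1 e3), (G p1 p2 _ _ e1 e2), (G p2 p3 _ _ e2 e3).
  rewrite !H2_gprod by auto.
  apply core; auto.
  - apply unit_sigma_range; auto.
  - apply unit_sigma_range; auto.
  - apply (unit_sigma_range c1 s1 c3 s3); auto.
  - apply unit_sigma; auto.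
Qed.

Lemma delta_H2_ge (X : R) : (forall delta, gromov_hyperbolic H2dist delta -> X <= delta) -> X <= delta_H2.
Proof.
  intros HX. unfold delta_H2.
  destruct (Glb_Rbar_correct (fun delta => gromov_hyperbolic H2dist delta)) as [lb glb].
  pose proof (lb dcore H2_hyp) as h1.
  assert (h2 : Rbar_le X (Glb_Rbar (fun delta => gromov_hyperbolic H2dist delta))).
  { apply glb. intros x hx. simpl. apply HX; auto. }
  destruct (Glb_Rbar (fun delta => gromov_hyperbolic H2dist delta)); simpl in *; try contradiction; auto.
Qed.

Lemma cos_b a : - PI/2 <= a -> a <= PI/2 -> 1 - a^2/2 <= cos a <= 1 - a^2/2 + a^4/24.
Proof.
intros. pose proof (cos_bound a 0 H H0). unfold cos_approx, cos_term in H1. simpl in H1.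
match type of H1 with ?x <= _ <= ?y => assert (x = 1 - a^2/2) by field; assert (y = 1 - a^2/2 + a^4/24) by field end.
lra. Qed.

Lemma sigma_bounds th : 0 <= th <= PI -> th^2/16 <= 1 - cos th <= th^2.
Proof.
  intros. pose proof PI_4. pose proof PI2_3_2.
  destruct (Rle_dec th (PI/2)).
  - assert (- PI/2 <= th) by lra. pose proof (cos_b th H2 r).
    assert (th^2 <= 4) by nra.
    assert (th^4 = th^2*th^2) by ring. assert (0 <= th^2) by nra. nra.
  - assert (cos th <= 0) by (apply cos_le_0; lra). pose proof (COS_bound th).
    assert (th^2 <= 16) by nra. assert (th^2 >= 2) by nra. lra.
Qed.

Lemma exp_m1_sq : exp (-1) * exp (-1) <= 1/3.
Proof.
  rewrite <- exp_plus. replace (-1 + -1) with (-(2)) by ring. rewrite exp_Ropp.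
  pose proof (exp_ineq1_le 2). apply (Rmult_le_reg_l (exp 2)). apply exp_pos.
  rewrite Rinv_r by (pose proof (exp_pos 2); lra). lra.
Qed.

Lemma exp_m2G_lower t t' s : 1 <= t -> 1 <= t' -> 0 <= s -> s/16 <= exp (-2 * Gf t t' s).
Proof.
  intros. pose proof (Gf_exp t t' s ltac:(lra) ltac:(lra) H1) as [E _]. unfold Qf in E.
  assert (ha : 0 < exp (-t) <= exp (-1)). { split. apply exp_pos. apply exp_le'. lra. }
  assert (hb : 0 < exp (-t') <= exp (-1)). { split. apply exp_pos. apply exp_le'. lra. }
  pose proof exp_m1_sq. pose proof (exp_pos (-1)).
  set (a := exp (-t)) in *. set (b := exp (-t')) in *. set (e := exp (-1)) in *. clearbody a b e.
  assert (a*a <= 1/3) by nra. assert (b*b <= 1/3) by nra.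
  assert (2/3 <= 1 - a*a) by lra. assert (2/3 <= 1 - b*b) by lra.
  assert (4/9 <= (1 - a*a)*(1-b*b)) by nra.
  assert (4/9 * s <= (1 - a*a)*(1-b*b)*s) by nra.
  assert (0 <= a*a + b*b) by nra. lra.
Qed.

Lemma exp_m2G_upper t t' s : 0 <= t -> 0 <= t' -> 0 <= s <= 2 ->
  exp (-2 * Gf t t' s) <= exp (-t) * exp (-t) + exp (-t') * exp (-t') + s/2.
Proof.
  intros. pose proof (Gf_exp t t' s H H0 (proj1 H1)) as [_ E]. unfold Qf in E.
  pose proof (exp_neg_le1 t H). pose proof (exp_neg_le1 t' H0).
  set (a := exp (-t)) in *. set (b := exp (-t')) in *. clearbody a b.
  assert (0 <= 1 - a*a <= 1) by nra. assert (0 <= 1 - b*b <= 1) by nra.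
  assert (0 <= (1 - a*a)*(1-b*b) <= 1) by (split; [apply Rmult_le_pos|]; nra).
  assert ((1 - a*a)*(1-b*b)*s <= s) by nra. lra.
Qed.

Lemma cosh_diff a b : cosh a * cosh b - sinh a * sinh b = cosh (a - b).
Proof.
  unfold cosh, sinh. replace (a - b) with (a + -b) by ring. replace (-(a + -b)) with (-a + b) by ring.
  rewrite !exp_plus. field.
Qed.

Lemma Gf_0 a b : 0 <= a -> 0 <= b -> Gf a b 0 = Rmin a b.
Proof.
  intros. unfold Gf, Vf. replace (1 - 0) with 1 by ring. rewrite Rmult_1_r, cosh_diff.
  unfold Rmin. destruct (Rle_dec a b).
  - replace (a - b) with (-(b - a)) by ring.
    replace (cosh (- (b - a))) with (cosh (b - a)) by (unfold cosh; rewrite Ropp_involutive; lra).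
    rewrite arcosh_cosh by lra. field.
  - rewrite arcosh_cosh by lra. field.
Qed.

Lemma tp_ray {Z : Type} (z : Z) n : tp (ray_pt z n) = INR n.
Proof. destruct n; reflexivity. Qed.

Lemma zp_ray {Z : Type} (z : Z) n : zp z (ray_pt z n) = z.
Proof. destruct n; reflexivity. Qed.

Lemma zp_ray' {Z : Type} (z z0 : Z) n : (1 <= n)%nat -> zp z0 (ray_pt z n) = z.
Proof. intros. destruct n. lia. reflexivity. Qed.

Lemma metric_refl {Z : Type} (d : Z -> Z -> R) : is_metric d -> forall x, d x x = 0.
Proof. intros [h _] x. apply h. auto. Qed.

Lemma gprod_self {Z : Type} (d : Z -> Z -> R) (D : R) : is_metric d ->
  forall p : cone Z, gprod (cone_dist d D) vertex p p = tp p.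
Proof.
  intros Hm p. destruct p as [[z t]|].
  - rewrite (cone_gprod d D z). unfold sC. rewrite metric_refl by auto.
    rewrite Rmult_0_r, cos_0. replace (1-1) with 0 by ring. rewrite Gf_0 by apply tp_ge0.
    unfold Rmin. destruct (Rle_dec _ _); auto.
  - unfold gprod. simpl. lra.
Qed.

Lemma part2 {Z : Type} (d : Z -> Z -> R) (D : R) : is_metric d ->
  forall z : Z, conv_infty (cone_dist d D) vertex (ray_pt z).
Proof.
  intros Hm z M. destruct (INR_unbounded M) as [N HN]. exists N. intros i j hi hj.
  rewrite (cone_gprod d D z). unfold sC. rewrite !zp_ray, metric_refl by auto.
  rewrite Rmult_0_r, cos_0. replace (1-1) with 0 by ring. rewrite !tp_ray.
  rewrite Gf_0 by apply pos_INR.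
  apply le_INR in hi. apply le_INR in hj. unfold Rmin. destruct (Rle_dec _ _); lra.
Qed.

Lemma part3 {Z : Type} (d : Z -> Z -> R) (D : R) :
  is_metric d -> is_lub (fun r => exists z z' : Z, r = d z z') D -> 0 < D ->
  forall z z' : Z, seq_equiv (cone_dist d D) vertex (ray_pt z) (ray_pt z') -> z = z'.
Proof.
  intros Hm Hl HD z z' He.
  destruct (Req_dec (d z z') 0) as [h|h]. apply Hm; auto.
  set (th := PI / D * d z z').
  pose proof (angle_range d D Hm Hl HD z z') as hth. fold th in hth.
  assert (0 < th). { unfold th. pose proof (metric_nonneg d Hm z z').
    apply Rmult_lt_0_compat. apply Rdiv_lt_0_compat; [exact PI_RGT_0|lra]. lra. }
  pose proof (sigma_bounds th hth) as [sb _].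
  set (s := 1 - cos th) in *.
  assert (hs : 0 < s). { assert (0 < th^2) by (apply pow_lt; lra). lra. }
  destruct (He (- ln (s/16) / 2)) as [N HN].
  specialize (HN (S N) ltac:(lia)).
  rewrite (cone_gprod d D z) in HN. unfold sC in HN. rewrite zp_ray, zp_ray' in HN by lia.
  rewrite !tp_ray in HN. fold th s in HN.
  pose proof (exp_m2G_lower (INR (S N)) (INR (S N)) s) as L.
  assert (1 <= INR (S N)) by (apply (le_INR 1); lia).
  specialize (L H0 H0 ltac:(lra)).
  assert (exp (-2 * Gf (INR (S N)) (INR (S N)) s) < exp (ln (s/16))).
  { apply exp_increasing. lra. }
  rewrite exp_ln in H1 by lra. lra.
Qed.

Lemma exists_elem {Z : Type} (d : Z -> Z -> R) (D : R) :
  is_lub (fun r => exists z z' : Z, r = d z z') D -> 0 < D -> exists z : Z, True.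
Proof.
  intros Hl HD. destruct (classic (exists z : Z, True)) as [h|h]; auto.
  exfalso. assert (D <= 0). { apply (proj2 Hl). intros x [z [z' _]]. exfalso; apply h; eauto. }
  lra.
Qed.

Lemma part1 {Z : Type} (d : Z -> Z -> R) (D : R) :
  is_metric d -> is_lub (fun r => exists z z' : Z, r = d z z') D -> 0 < D ->
  gromov_hyperbolic (cone_dist d D) delta_H2.
Proof.
  intros Hm Hl HD. destruct (exists_elem d D Hl HD) as [z0 _].
  exists vertex. intros p q r.
  set (X := Rmin (gprod (cone_dist d D) vertex p q) (gprod (cone_dist d D) vertex q r)
            - gprod (cone_dist d D) vertex p r).
  assert (X <= delta_H2).
  { apply delta_H2_ge. intros delta Hd. unfold X. rewrite !(cone_gprod d D z0). unfold sC.
    pose proof (angle_range d D Hm Hl HD) as AR.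
    pose proof (H2_compare delta Hd (tp p) (tp q) (tp r)
      (PI / D * d (zp z0 p) (zp z0 q)) (PI / D * d (zp z0 q) (zp z0 r)) (PI / D * d (zp z0 p) (zp z0 r))
      (tp_ge0 p) (tp_ge0 q) (tp_ge0 r) (AR _ _) (AR _ _) (AR _ _)) as HC.
    assert (PI / D * d (zp z0 p) (zp z0 r) <= PI / D * d (zp z0 p) (zp z0 q) + PI / D * d (zp z0 q) (zp z0 r)).
    { destruct Hm as [_ [_ Ht]]. pose proof (Ht (zp z0 p) (zp z0 q) (zp z0 r)).
      assert (0 < PI / D) by (apply Rdiv_lt_0_compat; [exact PI_RGT_0|lra]). nra. }
    specialize (HC H). lra. }
  unfold X in H. lra.
Qed.

Lemma gprod_sym {Z : Type} (d : Z -> Z -> R) (D : R) : is_metric d ->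
  forall p q : cone Z, gprod (cone_dist d D) vertex p q = gprod (cone_dist d D) vertex q p.
Proof.
  intros Hm p q. destruct (Hm) as [_ [Hs _]].
  unfold gprod. replace (cone_dist d D p q) with (cone_dist d D q p). field.
  destruct p as [[z t]|], q as [[z' t']|]; simpl; auto.
  rewrite Hs. f_equal. ring.
Qed.

Lemma dcore_pos : 0 < dcore.
Proof. unfold dcore. assert (ln 1 < ln 20) by (apply ln_increasing; lra). rewrite ln_1 in H. lra. Qed.

Lemma LimInf_lower (u : nat -> R) L : (exists N, forall n, (N <= n)%nat -> L <= u n) ->
  Rbar_le L (LimInf_seq u).
Proof. intros [N HN]. rewrite <- (LimInf_seq_const L). apply LimInf_le. exists N. auto. Qed.

Lemma LimInf_upper (u : nat -> R) L : (exists N, forall n, (N <= n)%nat -> u n <= L) ->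
  Rbar_le (LimInf_seq u) L.
Proof. intros [N HN]. rewrite <- (LimInf_seq_const L). apply LimInf_le. exists N. auto. Qed.

Lemma LimInf_pinfty (u : nat -> R) : (forall M, exists N, forall n, (N <= n)%nat -> M < u n) ->
  LimInf_seq u = p_infty.
Proof. intros H. apply is_LimInf_seq_unique. simpl. auto. Qed.

Lemma Rbar_glb_spec (E : Rbar -> Prop) : Rbar_is_glb E (Rbar_glb E).
Proof. unfold Rbar_glb. destruct (Rbar_ex_glb E). simpl. auto. Qed.

Lemma exp_small (e : R) : 0 < e -> exists N, forall n, (N <= n)%nat -> exp (- INR n) < e.
Proof.
  intros he. destruct (INR_unbounded (/ e)) as [N HN]. exists N. intros n hn.
  apply le_INR in hn. pose proof (exp_ineq1_le (INR n)). pose proof (pos_INR n).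
  rewrite exp_Ropp. assert (/ e < exp (INR n)) by lra.
  apply (Rmult_lt_reg_l (exp (INR n))). apply exp_pos. rewrite Rinv_r by (pose proof (exp_pos (INR n)); lra).
  apply (Rmult_lt_reg_l (/ e)). apply Rinv_0_lt_compat; auto.
  replace (/ e * (exp (INR n) * e)) with (exp (INR n)) by (field; lra). lra.
Qed.

Lemma sqr_le_inv a b : 0 <= b -> a * a <= b * b -> a <= b.
Proof. intros. destruct (Rle_dec a b); auto. nra. Qed.


Lemma ray_gprod {Z : Type} (d : Z -> Z -> R) (D : R) (z z' : Z) i : (1 <= i)%nat ->
  gprod (cone_dist d D) vertex (ray_pt z i) (ray_pt z' i) = Gf (INR i) (INR i) (1 - cos (PI / D * d z z')).
Proof.
  intros. rewrite (cone_gprod d D z). unfold sC. rewrite zp_ray, zp_ray' by auto. rewrite !tp_ray. auto.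
Qed.

Lemma rays_lower {Z : Type} (d : Z -> Z -> R) (D : R) (z z' : Z) s :
  s = 1 - cos (PI / D * d z z') -> 0 < s ->
  exists N0, forall i, (N0 <= i)%nat -> - ln s / 2 <= gprod (cone_dist d D) vertex (ray_pt z i) (ray_pt z' i).
Proof.
  intros hs sp. destruct (exp_small (s/4) ltac:(lra)) as [N HN]. exists (max N 1). intros i hi.
  rewrite ray_gprod by lia. rewrite <- hs.
  assert (hsr : s <= 2) by (rewrite hs; pose proof (COS_bound (PI / D * d z z')); lra).
  pose proof (exp_m2G_upper (INR i) (INR i) s (pos_INR i) (pos_INR i) ltac:(lra)) as U.
  pose proof (HN i ltac:(lia)). pose proof (exp_neg_le1 (INR i) (pos_INR i)).
  set (a := exp (- INR i)) in *. clearbody a.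
  assert (a*a <= a) by nra.
  assert (exp (-2 * Gf (INR i) (INR i) s) <= exp (ln s)) by (rewrite exp_ln; lra).
  apply exp_le_inv' in H2. lra.
Qed.

Lemma rays_upper {Z : Type} (d : Z -> Z -> R) (D : R) (z z' : Z) s :
  s = 1 - cos (PI / D * d z z') -> 0 < s ->
  forall i, (1 <= i)%nat -> gprod (cone_dist d D) vertex (ray_pt z i) (ray_pt z' i) <= - ln (s/16) / 2.
Proof.
  intros hs sp i hi. rewrite ray_gprod by lia. rewrite <- hs.
  assert (1 <= INR i) by (apply (le_INR 1); lia).
  pose proof (exp_m2G_lower (INR i) (INR i) s H H ltac:(lra)).
  assert (exp (ln (s/16)) <= exp (-2 * Gf (INR i) (INR i) s)) by (rewrite exp_ln; lra).
  apply exp_le_inv' in H1. lra.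
Qed.

Lemma ray_self_equiv {Z : Type} (d : Z -> Z -> R) (D : R) (z : Z) : is_metric d ->
  seq_equiv (cone_dist d D) vertex (ray_pt z) (ray_pt z).
Proof.
  intros Hm M. destruct (INR_unbounded M) as [N HN]. exists N. intros i hi.
  rewrite gprod_self by auto. rewrite tp_ray. apply le_INR in hi. lra.
Qed.

Lemma part4 {Z : Type} (d : Z -> Z -> R) (D : R) :
  is_metric d -> is_lub (fun r => exists z z' : Z, r = d z z') D -> 0 < D ->
  exists c1 c2 : R, 0 < c1 /\ 0 < c2 /\
     forall z z' : Z,
       c1 * exp_neg (gprod_infty (cone_dist d D) vertex (ray_pt z) (ray_pt z')) <= d z z' /\
       d z z' <= c2 * exp_neg (gprod_infty (cone_dist d D) vertex (ray_pt z) (ray_pt z')).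
Proof.
  intros Hm Hl HD.
  pose proof PI_RGT_0 as hpi.
  exists (D / (PI * exp (2 * dcore))), (16 * D / PI).
  split. { apply Rdiv_lt_0_compat; auto. apply Rmult_lt_0_compat; auto. apply exp_pos. }
  split. { apply Rdiv_lt_0_compat; lra. }
  intros z z'.
  set (dY := cone_dist d D).
  set (E := fun r : Rbar => exists x' y' : nat -> cone Z,
    conv_infty dY vertex x' /\ conv_infty dY vertex y' /\
    seq_equiv dY vertex (ray_pt z) x' /\ seq_equiv dY vertex (ray_pt z') y' /\
    r = LimInf_seq (fun i => gprod dY vertex (x' i) (y' i))).
  unfold gprod_infty. fold dY. fold E.
  pose proof (Rbar_glb_spec E) as [Glb1 Glb2].
  assert (Erays : E (LimInf_seq (fun i => gprod dY vertex (ray_pt z i) (ray_pt z' i)))).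
  { exists (ray_pt z), (ray_pt z'). repeat split; try apply part2; try apply ray_self_equiv; auto. }
  assert (HH : forall x' y' : nat -> cone Z, forall i,
     gprod dY vertex (x' i) (y' i) >=
     Rmin (gprod dY vertex (ray_pt z i) (x' i)) (gprod dY vertex (ray_pt z i) (y' i)) - dcore).
  { intros. unfold dY. rewrite (gprod_sym d D Hm (ray_pt z i) (x' i)). apply (cone_hyp d D z); auto. }
  destruct (classic (z = z')) as [ez|nz].
  - subst z'.
    assert (Hg : Rbar_glb E = p_infty).
    { assert (Rbar_le p_infty (Rbar_glb E)).
      { apply Glb2. intros e [x' [y' [_ [_ [ex [ey ee]]]]]]. rewrite ee.
        rewrite LimInf_pinfty. simpl; auto. intros M.
        destruct (ex (M + dcore + 1)) as [N1 H1]. destruct (ey (M + dcore + 1)) as [N2 H2].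
        exists (max N1 N2). intros n hn. specialize (H1 n ltac:(lia)). specialize (H2 n ltac:(lia)).
        pose proof (HH x' y' n).
        assert (M + dcore + 1 <= Rmin (gprod dY vertex (ray_pt z n) (x' n)) (gprod dY vertex (ray_pt z n) (y' n)))
          by (apply Rmin_glb; lra). lra. }
      destruct (Rbar_glb E); simpl in H; try contradiction; auto. }
    rewrite Hg. simpl. rewrite metric_refl by auto. lra.
  - assert (hd : d z z' <> 0). { intro h. apply nz. apply Hm. auto. }
    set (th := PI / D * d z z').
    pose proof (angle_range d D Hm Hl HD z z') as hth. fold th in hth.
    assert (thp : 0 < th). { unfold th. pose proof (metric_nonneg d Hm z z').
      apply Rmult_lt_0_compat. apply Rdiv_lt_0_compat; lra. lra. }
    pose proof (sigma_bounds th hth) as [sb1 sb2].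
    set (s := 1 - cos th) in *.
    assert (sp : 0 < s). { assert (0 < th^2) by (apply pow_lt; lra). lra. }
    destruct (rays_lower d D z z' s eq_refl sp) as [N0 HN0].
    assert (Hlow : Rbar_le (- ln s / 2 - 2 * dcore) (Rbar_glb E)).
    { apply Glb2. intros e [x' [y' [_ [_ [ex [ey ee]]]]]]. rewrite ee.
      apply LimInf_lower.
      destruct (ex (- ln s / 2)) as [N1 H1]. destruct (ey (- ln s / 2)) as [N2 H2].
      exists (max N0 (max N1 N2)). intros n hn.
      specialize (H1 n ltac:(lia)). specialize (H2 n ltac:(lia)). specialize (HN0 n ltac:(lia)).
      pose proof (HH x' y' n) as K1.
      pose proof (cone_hyp d D z Hm Hl HD (ray_pt z n) (ray_pt z' n) (y' n)) as K2.
      fold dY in K2, HN0. pose proof dcore_pos.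
      assert (- ln s / 2 <= Rmin (gprod dY vertex (ray_pt z n) (ray_pt z' n)) (gprod dY vertex (ray_pt z' n) (y' n)))
        by (apply Rmin_glb; lra).
      assert (- ln s / 2 - dcore <= Rmin (gprod dY vertex (ray_pt z n) (x' n)) (gprod dY vertex (ray_pt z n) (y' n)))
        by (apply Rmin_glb; lra).
      lra. }
    assert (Hup : Rbar_le (Rbar_glb E) (- ln (s/16) / 2)).
    { apply Rbar_le_trans with (LimInf_seq (fun i => gprod dY vertex (ray_pt z i) (ray_pt z' i))).
      apply Glb1; auto.
      apply LimInf_upper. exists 1%nat. intros n hn. apply (rays_upper d D z z' s eq_refl sp n hn). }
    destruct (Rbar_glb E) as [r| |]; simpl in Hlow, Hup; try contradiction.
    simpl.
    assert (hd0 : 0 <= d z z') by (apply metric_nonneg; auto).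
    assert (dth : d z z' = th * D / PI) by (unfold th; field; lra).
    split.
    +
      assert (E1 : exp (-r) * exp (-r) <= (exp (2*dcore) * th) * (exp (2*dcore) * th)).
      { rewrite <- exp_plus.
        assert (exp (-r + -r) <= exp (ln s + 4 * dcore)) by (apply exp_le'; lra).
        rewrite (exp_plus (ln s)), exp_ln in H by lra.
        replace (exp (2*dcore) * th * (exp (2*dcore) * th)) with (exp (4*dcore) * th^2).
        2:{ replace (4*dcore) with (2*dcore + 2*dcore) by ring. rewrite exp_plus. ring. }
        pose proof (exp_pos (4*dcore)). nra. }
      apply sqr_le_inv in E1. 2:{ pose proof (exp_pos (2*dcore)). nra. }
      rewrite dth. pose proof (exp_pos (2*dcore)).
      apply (Rmult_le_reg_l (PI * exp (2 * dcore))). nra.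
      replace (PI * exp (2 * dcore) * (D / (PI * exp (2 * dcore)) * exp (- r))) with (D * exp (-r)) by (field; lra).
      replace (PI * exp (2 * dcore) * (th * D / PI)) with (D * (exp (2*dcore) * th)) by (field; lra).
      apply Rmult_le_compat_l; lra.
    + assert (E2 : (th/16) * (th/16) <= exp (-r) * exp (-r)).
      { rewrite <- exp_plus.
        assert (exp (ln (s/16)) <= exp (-r + -r)) by (apply exp_le'; lra).
        rewrite exp_ln in H by lra. nra. }
      apply sqr_le_inv in E2. 2:{ pose proof (exp_pos (-r)). lra. }
      rewrite dth.
      replace (16 * D / PI * exp (- r)) with (D * 16 / PI * exp (-r)) by (field; lra).
      replace (th * D / PI) with (D * 16 / PI * (th / 16)) by (field; lra).
      apply Rmult_le_compat_l; auto. apply Rmult_le_pos. lra. apply Rlt_le, Rinv_0_lt_compat; lra.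
Qed.

Lemma gt_of_exp (G M : R) : exp (-2 * G) < exp (-2 * M) -> M < G.
Proof. intros. apply exp_lt_inv in H. lra. Qed.

Lemma part5 {Z : Type} (d : Z -> Z -> R) (D : R) :
  is_metric d -> is_lub (fun r => exists z z' : Z, r = d z z') D -> 0 < D ->
  complete_metric d ->
  forall x : nat -> cone Z, conv_infty (cone_dist d D) vertex x ->
  exists z : Z, seq_equiv (cone_dist d D) vertex x (ray_pt z).
Proof.
  intros Hm Hl HD Hc x Hx.
  destruct (exists_elem d D Hl HD) as [z0 _].
  pose proof PI_RGT_0 as hpi.
  set (u := fun n => zp z0 (x n)).
  assert (Cauchy : forall eta, 0 < eta -> exists N, forall m n, (N <= m)%nat -> (N <= n)%nat -> d (u m) (u n) < eta).
  { intros eta he.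
    set (eps := Rmin (1/4) ((eta * PI / D)^2 / 256)).
    assert (hep : 0 < eps). { unfold eps. apply Rmin_glb_lt. lra.
      assert (0 < eta * PI / D) by (apply Rdiv_lt_0_compat; [nra|lra]).
      assert (0 < (eta * PI / D)^2) by (apply pow_lt; lra). lra. }
    assert (he1 : eps <= 1/4) by apply Rmin_l. assert (he2 : eps <= (eta * PI / D)^2 / 256) by apply Rmin_r.
    destruct (Hx (- ln eps / 2)) as [N HN]. exists N. intros m n hm hn.
    specialize (HN m n hm hn). rewrite (cone_gprod d D z0) in HN. unfold sC in HN.
    set (th := PI / D * d (zp z0 (x m)) (zp z0 (x n))) in HN.
    pose proof (angle_range d D Hm Hl HD (zp z0 (x m)) (zp z0 (x n))) as hth. fold th in hth.
    pose proof (sigma_bounds th hth) as [sb1 sb2].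
    set (s := 1 - cos th) in *.
    pose proof (Gf_exp (tp (x m)) (tp (x n)) s (tp_ge0 _) (tp_ge0 _) ltac:(pose proof (pow2_ge_0 th); lra)) as [Q1 _].
    assert (exp (-2 * Gf (tp (x m)) (tp (x n)) s) < eps).
    { replace eps with (exp (-2 * (- ln eps / 2))). apply exp_increasing. lra.
      replace (-2 * (- ln eps / 2)) with (ln eps) by field. apply exp_ln; auto. }
    unfold Qf in Q1.
    pose proof (exp_neg_le1 (tp (x m)) (tp_ge0 _)). pose proof (exp_neg_le1 (tp (x n)) (tp_ge0 _)).
    set (a := exp (- tp (x m))) in *. set (b := exp (- tp (x n))) in *. clearbody a b.
    assert (0 <= s) by (pose proof (pow2_ge_0 th); lra).
    assert (0 <= 1 - a*a) by nra. assert (0 <= 1 - b*b) by nra.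
    assert (0 <= (1 - a*a)*(1-b*b)*s) by (apply Rmult_le_pos; [apply Rmult_le_pos|]; lra).
    assert (0 <= a*a) by nra. assert (0 <= b*b) by nra.
    assert (a*a <= 1/2) by lra. assert (b*b <= 1/2) by lra.
    assert (1/4 <= (1 - a*a)*(1-b*b)) by nra.
    assert (s/4 <= (1 - a*a)*(1-b*b)*s) by nra.
    assert (0 <= a*a) by nra. assert (0 <= b*b) by nra.
    assert (s < 16 * eps) by lra.
    assert (th^2 < (eta * PI / D)^2) by lra.
    assert (th < eta * PI / D).
    { destruct (Rlt_dec th (eta * PI / D)); auto.
      assert (0 < eta * PI / D) by (apply Rdiv_lt_0_compat; [nra|lra]). nra. }
    unfold th in H8. fold (u m) (u n) in H8.
    apply (Rmult_lt_reg_l (PI / D)). apply Rdiv_lt_0_compat; lra.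
    replace (PI / D * eta) with (eta * PI / D) by (field; lra). auto. }
  destruct (Hc u Cauchy) as [z Hz].
  exists z. intros M.
  set (eps := exp (-2 * M)).
  assert (hep : 0 < eps) by apply exp_pos.
  destruct (Hx (- ln (eps/3) / 2) ) as [N1 H1].
  destruct (exp_small (eps/3) ltac:(lra)) as [N2 H2].
  assert (hq : 0 < sqrt (2 * eps / 3) * D / PI).
  { apply Rdiv_lt_0_compat; auto. apply Rmult_lt_0_compat; auto. apply sqrt_lt_R0. lra. }
  destruct (Hz _ hq) as [N3 H3].
  exists (max 1 (max N1 (max N2 N3))). intros i hi.
  specialize (H1 i i ltac:(lia) ltac:(lia)). specialize (H2 i ltac:(lia)). specialize (H3 i ltac:(lia)).
  rewrite gprod_self in H1 by auto.
  apply gt_of_exp. fold eps.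
  rewrite (cone_gprod d D z0). rewrite tp_ray.
  set (th := PI / D * d (zp z0 (x i)) z).
  pose proof (angle_range d D Hm Hl HD (zp z0 (x i)) z) as hth. fold th in hth.
  pose proof (sigma_bounds th hth) as [sb1 sb2].
  unfold sC. rewrite zp_ray' by lia. fold th.
  pose proof (COS_bound th).
  pose proof (exp_m2G_upper (tp (x i)) (INR i) (1 - cos th) (tp_ge0 _) (pos_INR i) ltac:(lra)) as U.
  assert (A1 : exp (- tp (x i)) * exp (- tp (x i)) < eps / 3).
  { rewrite <- exp_plus. replace (eps/3) with (exp (ln (eps/3))) by (apply exp_ln; lra).
    apply exp_increasing. lra. }
  assert (A2 : exp (- INR i) * exp (- INR i) < eps / 3).
  { pose proof (exp_neg_le1 (INR i) (pos_INR i)). nra. }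
  assert (A3 : th < sqrt (2 * eps / 3)).
  { unfold th. fold (u i). apply (Rmult_lt_reg_r (D / PI)). apply Rdiv_lt_0_compat; lra.
    replace (PI / D * d (u i) z * (D / PI)) with (d (u i) z) by (field; lra).
    replace (sqrt (2 * eps / 3) * (D / PI)) with (sqrt (2 * eps / 3) * D / PI) by (field; lra). auto. }
  assert (A4 : th^2 < 2 * eps / 3).
  { pose proof (sqrt_sqrt (2*eps/3) ltac:(lra)). nra. }
  lra.
Qed.

Theorem proposition6p1 (Z : Type) (d : Z -> Z -> R) (D : R)
  (Hmet : is_metric d)
  (Hdiam : is_lub (fun r => exists z z' : Z, r = d z z') D)
  (HDpos : 0 < D) :
  let Y := cone Z in
  let dY := cone_dist d D in
  let o : Y := vertex in
  gromov_hyperbolic dY delta_H2 /\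
  (forall z : Z, conv_infty dY o (ray_pt z)) /\
  (forall z z' : Z, seq_equiv dY o (ray_pt z) (ray_pt z') -> z = z') /\
  (exists c1 c2 : R, 0 < c1 /\ 0 < c2 /\
     forall z z' : Z,
       c1 * exp_neg (gprod_infty dY o (ray_pt z) (ray_pt z')) <= d z z' /\
       d z z' <= c2 * exp_neg (gprod_infty dY o (ray_pt z) (ray_pt z'))) /\
  (complete_metric d ->
     forall x : nat -> Y, conv_infty dY o x ->
       exists z : Z, seq_equiv dY o x (ray_pt z)).
Proof.
  intros Y dY o. unfold Y, dY, o.
  split. apply part1; auto.
  split. apply part2; auto.
  split. apply part3; auto.
  split. apply part4; auto.
  intros Hc. apply part5; auto.
Qed.
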